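(* Let $S:\mathcal{T}\to\mathcal{T}^{pl}$ be a section of the forget-planarity projection $\pi:\mathcal{T}^{pl}\to\mathcal{T}$, i.e. a linear map sending each non-planar rooted tree $t$ to a planar rooted tree $S(t)$ with $\pi(S(t))=t$. Let $\widetilde{\Psi}_S:=\pi\circ\Psi\circ S:\mathcal{T}\to\mathcal{T}$. Then for every non-planar rooted tree $t$, $$\widetilde{\Psi}_S(t)=\sum_{s\in T}\beta_S(s,t)\,s,$$ where the $\beta_S(s,t)$ are nonnegative integers (depending on $S$), given by $\beta_S(s,t)=\tilde b(s,S(t))/sym(s)$, where $sym(s)$ is the symmetry factor of $s$ and $\tilde b(s,\tau)$ is the number of bijections $\varphi:V(s)\to V(\tau)$ which are increasing from $(V(s),<)$ into $(V(\tau),\lll)$ and such that $\varphi^{-1}$ is increasing from $(V(\tau),<)$ into $(V(s),<)$.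
   Context: $\mathcal{T}^{pl}$ (resp. $\mathcal{T}$) is the vector space spanned by the set $T^{pl}$ of planar rooted trees (resp. the set $T$ of non-planar rooted trees); a rooted tree is a finite oriented tree with a root having no outgoing edge, every other vertex having exactly one outgoing edge, and it is planar if the branches at each vertex are ordered left to right. $\bullet$ is the one-vertex tree, $V(\sigma)$ the vertex set. For planar trees, $B_+(\tau_1\cdots\tau_k)$ joins the roots of the ordered trees $\tau_i$ to a new root; the left Butcher product is $\sigma\circ\!\!\searrow B_+(\tau_1\cdots\tau_k):=B_+(\sigma\tau_1\cdots\tau_k)$, and each planar tree with at least two vertices is uniquely $\sigma_1\circ\!\!\searrow\sigma_2$. The left grafting is $\sigma\searrow\tau=\sum_{v\in V(\tau)}\sigma\searrow_v\tau$, where $\sigma\searrow_v\tau$ grafts the root of $\sigma$ onto $v$ as the leftmost branch at $v$. $\Psi:\mathcal{T}^{pl}\to\mathcal{T}^{pl}$ is the linear map with $\Psi(\bullet)=\bullet$ and $\Psi(\sigma_1\circ\!\!\searrow\sigma_2)=\Psi(\sigma_1)\searrow\Psi(\sigma_2)$. Partial order $<$: $v<w$ if $v\ne w$ and the path from the root to $w$ passes through $v$. Total order $\lll$ on a planar tree $\tau=\tau_1\circ\!\!\searrow\tau_2$, recursively: $v\lll w$ iff ($v\lll w$ within $V(\tau_1)$ or within $V(\tau_2)$) or ($v\in V(\tau_2)$, $w\in V(\tau_1)$). Increasing means order-preserving. $sym(s)$ is the number of bijections $V(s)\to V(s)$ increasing for $<$ in both directions (tree automorphisms). *)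

(* Defs.v *)
From HB Require Import structures.
From mathcomp Require Import all_boot all_order all_algebra.
Set Implicit Arguments. Unset Strict Implicit. Unset Printing Implicit Defensive.

Inductive ptree : Type := Node of seq ptree.

Definition pbullet : ptree := Node [::].

Fixpoint tree_of (t : ptree) : GenTree.tree unit :=
  let: Node l := t in GenTree.Node 0 (map tree_of l).

Fixpoint of_tree (x : GenTree.tree unit) : ptree :=
  match x with
  | GenTree.Leaf _ => Node [::]
  | GenTree.Node _ l => Node (map of_tree l)
  end.

Fixpoint ptree_K (t : ptree) : of_tree (tree_of t) = t :=
  match t with
  | Node l => f_equal Node
      ((fix go (l : seq ptree) : map of_tree (map tree_of l) = l :=
          match l with
          | [::] => erefl
          | x :: r => f_equal2 cons (ptree_K x) (go r)
          end) l)
  end.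

HB.instance Definition _ := Countable.copy ptree (can_type ptree_K).

(* A vertex is coded by its address: the list of child indices (0 = leftmost)
   followed on the path from the root.  The root is [::]. *)
Fixpoint verts (t : ptree) : seq (seq nat) :=
  let: Node l := t in
  [::] :: (fix go (i : nat) (l : seq ptree) : seq (seq nat) :=
             match l with
             | [::] => [::]
             | s :: r => map (cons i) (verts s) ++ go i.+1 r
             end) 0 l.

Definition V (t : ptree) := seq_sub (verts t).

(* Partial order <: v < w iff v <> w and the root-to-w path passes through v,
   i.e. the address of v is a proper prefix of that of w. *)
Definition addr_lt (v w : seq nat) : bool := (size v < size w) && prefix v w.
Definition vlt (t : ptree) (a b : V t) : bool := addr_lt (val a) (val b).

(* Total order <<< , defined recursively through t = t1 o-> t2
   (t1 = leftmost branch, t2 = the root with the remaining branches).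
   Vertices of t1 are the addresses 0 :: x (x a vertex of t1);
   vertices of t2 are [::] and (i.+1 :: x) (= vertex (i :: x) of t2). *)
Definition shift_addr (v : seq nat) : seq nat :=
  match v with [::] => [::] | i :: x => i.-1 :: x end.

Fixpoint lll (t : ptree) (v w : seq nat) {struct t} : bool :=
  let: Node l := t in
  (fix go (l : seq ptree) (v w : seq nat) {struct l} : bool :=
     match l with
     | [::] => false
     | t1 :: r =>
       match v, w with
       | 0 :: v', 0 :: w' => lll t1 v' w'      (* both in V(t1) *)
       | 0 :: _, _ => false                    (* v in V(t1), w in V(t2) *)
       | _, 0 :: _ => true                     (* v in V(t2), w in V(t1) *)
       | _, _ => go r (shift_addr v) (shift_addr w) (* both in V(t2) *)
       end
     end) l v w.

(* sigma ->_v tau : graft the root of sigma onto v as leftmost branch at v. *)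
Fixpoint graft (sigma : ptree) (v : seq nat) (tau : ptree) {struct v} : ptree :=
  let: Node l := tau in
  match v with
  | [::] => Node (sigma :: l)
  | i :: v' => Node [seq if j == i then graft sigma v' c else c
                    | j <- iota 0 (size l), c <- [:: nth (Node [::]) l j]]
  end.

(* Linear combinations of planar trees with coefficients in nat are encoded as
   finite lists (formal sums, with multiplicity). *)
Definition lincomb := seq ptree.

Definition graftL (A B : lincomb) : lincomb :=
  flatten [seq [seq graft a v b | v <- verts b] | a <- A, b <- B].

Fixpoint Psi (t : ptree) : lincomb :=
  let: Node l := t in
  (fix go (l : seq ptree) : lincomb :=
     match l with
     | [::] => [:: pbullet]
     | t1 :: r => graftL (Psi t1) (go r)
     end) l.

(* Canonical representative of the non-planar tree underlying a planar tree:
   recursively canonicalize the branches and sort them (by a fixed injective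
   coding).  Two planar trees have the same underlying non-planar tree iff
   they have the same canonical form. *)
Definition ptree_le (a b : ptree) : bool := pickle a <= pickle b.

Fixpoint canon (t : ptree) : ptree :=
  let: Node l := t in Node (sort ptree_le (map canon l)).

(* T : the set of non-planar rooted trees (as canonical representatives). *)
Definition ntree := {t : ptree | canon t == t}.

Definition pi_lc (X : lincomb) : seq ptree := map canon X.

Definition coef (s : ntree) (X : seq ptree) : nat := count (pred1 (val s)) X.

Definition PsiTilde (S : ntree -> ptree) (t : ntree) : seq ptree :=
  pi_lc (Psi (S t)).

(* btilde(s, tau): bijections phi : V(s) -> V(tau), increasing from (V(s),<)
   into (V(tau),<<<), with phi^-1 increasing from (V(tau),<) into (V(s),<)
   (written out as: phi a < phi b -> a < b). *)
Definition btilde (s tau : ptree) : nat :=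
  #|[pred f : {ffun V s -> V tau} |
      [&& injectiveb f, [forall y, exists x, f x == y],
          [forall a, forall b, vlt a b ==> lll tau (val (f a)) (val (f b))]
        & [forall a, forall b, vlt (f a) (f b) ==> vlt a b]]]|.

Definition sym (s : ptree) : nat :=
  #|[pred f : {ffun V s -> V s} |
      [&& injectiveb f, [forall y, exists x, f x == y],
          [forall a, forall b, vlt a b ==> vlt (f a) (f b)]
        & [forall a, forall b, vlt (f a) (f b) ==> vlt a b]]]|.

(* Main.v *)
Require Import Defs.
From HB Require Import structures.
From mathcomp Require Import all_boot all_order all_algebra.
From mathcomp Require Import zify.
Set Implicit Arguments. Unset Strict Implicit. Unset Printing Implicit Defensive.

Definition surjb (A B : finType) (f : {ffun A -> B}) := [forall y, exists x, f x == y].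
Definition bijb (A B : finType) (f : {ffun A -> B}) := injectiveb f && surjb f.
Definition cond (A B : finType) (RA : rel A) (RB LB : rel B) (f : {ffun A -> B}) :=
  [forall a, forall b, RA a b ==> LB (f a) (f b)] &&
  [forall a, forall b, RB (f a) (f b) ==> RA a b].
Definition bt (A B : finType) (RA : rel A) (RB LB : rel B) : nat :=
  #|[pred f : {ffun A -> B} | [&& injectiveb f, [forall y, exists x, f x == y],
      [forall a, forall b, RA a b ==> LB (f a) (f b)]
    & [forall a, forall b, RB (f a) (f b) ==> RA a b]]]|.

Lemma btE (A B : finType) (RA : rel A) (RB LB : rel B) :
  bt RA RB LB = #|[pred f | bijb f && cond RA RB LB f]|.
Proof. by apply: eq_card => f; rewrite !inE /bijb /cond /surjb andbA. Qed.

Lemma bijbP (A B : finType) (f : {ffun A -> B}) :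
  reflect (injective f /\ forall y, exists x, f x = y) (bijb f).
Proof.
apply: (iffP andP) => [[/injectiveP fi /forallP fs]|[fi fs]]; split => //.
- by move=> y; case/existsP: (fs y) => x /eqP; exists x.
- exact/injectiveP.
- by apply/forallP => y; case: (fs y) => x <-; apply/existsP; exists x.
Qed.

Lemma card_partition_pt (A B : finType) (Q : pred {ffun A -> B}) (b0 : B) :
  (forall f, Q f -> bijb f) ->
  #|Q| = \sum_(u : A) #|[pred f | Q f && (f u == b0)]|.
Proof.
move=> QB.
have E: forall u, #|[pred f | Q f && (f u == b0)]| =
   \sum_f (if Q f && (f u == b0) then 1 else 0).
  by move=> u; rewrite -sum1_card big_mkcond.
under eq_bigr do rewrite E.
rewrite exchange_big -sum1_card big_mkcond /=.
apply: eq_bigr => f _.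
rewrite unfold_in; case Qf: (Q f) => /=; last by rewrite big1.
have /bijbP [fi fs] := QB f Qf.
case: (fs b0) => u fu.
rewrite (bigD1 u) //= fu eqxx big1 // => v vu.
case: eqP => // fv; case/eqP: vu; apply: fi; by rewrite fv fu.
Qed.

Lemma bt_le_iso (A B B' : finType) (RA : rel A) (RB LB : rel B) (RB' LB' : rel B')
  (h : B -> B') : injective h -> (forall y, exists x, h x = y) ->
  (forall x y, RB' (h x) (h y) -> RB x y) -> (forall x y, LB x y -> LB' (h x) (h y)) ->
  bt RA RB LB <= bt RA RB' LB'.
Proof.
move=> hi hs hR hL; rewrite !btE.
set F := fun f : {ffun A -> B} => [ffun a => h (f a)].
have Fi : injective F.
  move=> f g /ffunP E; apply/ffunP => a; move: (E a); rewrite !ffunE; exact: hi.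
rewrite -(card_imset _ Fi); apply: subset_leq_card; apply/subsetP => g.
case/imsetP => f; rewrite inE => /andP [/bijbP [fi fs] /andP [/forallP c1 /forallP c2]] ->.
rewrite inE; apply/andP; split.
  apply/bijbP; split.
    by move=> a b; rewrite !ffunE => /hi; apply: fi.
  move=> y; case: (hs y) => z <-; case: (fs z) => x <-; exists x; by rewrite ffunE.
apply/andP; split; apply/forallP => a; apply/forallP => b; rewrite !ffunE.
  by apply/implyP => Rab; apply: hL; move/forallP: (c1 a) => /(_ b) /implyP; apply.
by apply/implyP => /hR; move/forallP: (c2 a) => /(_ b) /implyP.
Qed.

Record splt (A : finType) := MkSplt {
  sD : pred A; sT1 : finType; sT2 : finType; se1 : sT1 -> A; se2 : sT2 -> A;
  se1_inj : injective se1; se2_inj : injective se2;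
  se1D : forall x, sD (se1 x); se2D : forall y, ~~ sD (se2 y);
  sC1 : forall a, sD a -> exists x, se1 x = a;
  sC2 : forall a, ~~ sD a -> exists y, se2 y = a }.

Section Split.
Variables (A B : finType) (SA : splt A) (SB : splt B) (b0 : B).
Local Notation A1 := (@sT1 _ SA). Local Notation A2 := (@sT2 _ SA).
Local Notation B1 := (@sT1 _ SB). Local Notation B2 := (@sT2 _ SB).
Local Notation DA := (@sD _ SA). Local Notation DB := (@sD _ SB).
Local Notation e1 := (@se1 _ SA). Local Notation e2 := (@se2 _ SA).
Local Notation d1 := (@se1 _ SB). Local Notation d2 := (@se2 _ SB).
Let e1i := @se1_inj _ SA. Let e2i := @se2_inj _ SA. Let d1i := @se1_inj _ SB. Let d2i := @se2_inj _ SB.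
Let e1D := @se1D _ SA. Let e2D := @se2D _ SA. Let d1D := @se1D _ SB. Let d2D := @se2D _ SB.
Let eC1 := @sC1 _ SA. Let eC2 := @sC2 _ SA. Let dC1 := @sC1 _ SB. Let dC2 := @sC2 _ SB.

Definition mrg (g1 : {ffun A1 -> B1}) (g2 : {ffun A2 -> B2}) : {ffun A -> B} :=
  [ffun a => if [pick x | e1 x == a] is Some x then d1 (g1 x)
             else if [pick y | e2 y == a] is Some y then d2 (g2 y) else b0].

Lemma merge1 g1 g2 x : mrg g1 g2 (e1 x) = d1 (g1 x).
Proof.
rewrite ffunE; case: pickP => [x' /eqP /e1i -> //|/(_ x)]; by rewrite eqxx.
Qed.

Lemma merge2 g1 g2 y : mrg g1 g2 (e2 y) = d2 (g2 y).
Proof.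
rewrite ffunE; case: pickP => [x' /eqP E|_].
  by move: (e1D x') (e2D y); rewrite E => ->.
case: pickP => [y' /eqP /e2i -> //|/(_ y)]; by rewrite eqxx.
Qed.

Lemma cover a : (exists x, e1 x = a) \/ (exists y, e2 y = a).
Proof. case D: (DA a); [left; exact: eC1 | right; apply: eC2; by rewrite D]. Qed.

Lemma coverB b : (exists x, d1 x = b) \/ (exists y, d2 y = b).
Proof. case D: (DB b); [left; exact: dC1 | right; apply: dC2; by rewrite D]. Qed.

Lemma merge_bij g1 g2 : bijb g1 -> bijb g2 -> bijb (mrg g1 g2).
Proof.
move=> /bijbP [i1 s1] /bijbP [i2 s2]; apply/bijbP; split.
  move=> a a'; case: (cover a) => [[x <-]|[y <-]]; case: (cover a') => [[x' <-]|[y' <-]];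
    rewrite ?merge1 ?merge2.
  - by move/d1i/i1 ->.
  - by move=> E; move: (d1D (g1 x)) (d2D (g2 y')); rewrite E => ->.
  - by move=> E; move: (d1D (g1 x')) (d2D (g2 y)); rewrite E => ->.
  - by move/d2i/i2 ->.
move=> b; case: (coverB b) => [[z <-]|[z <-]].
  by case: (s1 z) => x <-; exists (e1 x); rewrite merge1.
by case: (s2 z) => y <-; exists (e2 y); rewrite merge2.
Qed.

Lemma merge_inj : injective (fun p : {ffun A1 -> B1} * {ffun A2 -> B2} => mrg p.1 p.2).
Proof.
move=> [g1 g2] [h1 h2] /= E; congr pair; apply/ffunP => z.
  by apply: d1i; rewrite -(merge1 g1 g2) -(merge1 h1 h2) E.
by apply: d2i; rewrite -(merge2 g1 g2) -(merge2 h1 h2) E.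
Qed.

Lemma forall2_merge (Q : A -> A -> B -> B -> bool) g1 g2 :
  [forall a, forall b, Q a b (mrg g1 g2 a) (mrg g1 g2 b)] =
  [&& [forall x, forall x', Q (e1 x) (e1 x') (d1 (g1 x)) (d1 (g1 x'))],
      [forall x, forall y, Q (e1 x) (e2 y) (d1 (g1 x)) (d2 (g2 y))],
      [forall y, forall x, Q (e2 y) (e1 x) (d2 (g2 y)) (d1 (g1 x))] &
      [forall y, forall y', Q (e2 y) (e2 y') (d2 (g2 y)) (d2 (g2 y'))]].
Proof.
apply/forallP/and4P => [H|[/forallP H1 /forallP H2 /forallP H3 /forallP H4]].
  split; apply/forallP => u; apply/forallP => v.
  - by move/forallP: (H (e1 u)) => /(_ (e1 v)); rewrite !merge1.
  - by move/forallP: (H (e1 u)) => /(_ (e2 v)); rewrite merge1 merge2.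
  - by move/forallP: (H (e2 u)) => /(_ (e1 v)); rewrite merge1 merge2.
  - by move/forallP: (H (e2 u)) => /(_ (e2 v)); rewrite !merge2.
move=> a; apply/forallP => b.
case: (cover a) => [[x <-]|[y <-]]; case: (cover b) => [[x' <-]|[y' <-]];
  rewrite ?merge1 ?merge2.
- by move/forallP: (H1 x) => /(_ x').
- by move/forallP: (H2 x) => /(_ y').
- by move/forallP: (H3 y) => /(_ x').
- by move/forallP: (H4 y) => /(_ y').
Qed.


Lemma condP (A' B' : finType) (RA : rel A') (RB LB : rel B') (f : {ffun A' -> B'}) :
  reflect ((forall a b, RA a b -> LB (f a) (f b)) /\ (forall a b, RB (f a) (f b) -> RA a b))
    (cond RA RB LB f).
Proof.
apply: (iffP andP) => [[/forallP H1 /forallP H2]|[H1 H2]]; split.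
- by move=> a b; move/forallP: (H1 a) => /(_ b) /implyP.
- by move=> a b; move/forallP: (H2 a) => /(_ b) /implyP.
- by apply/forallP => a; apply/forallP => b; apply/implyP; apply: H1.
- by apply/forallP => a; apply/forallP => b; apply/implyP; apply: H2.
Qed.

Section CondMerge.
Variables (RA : rel A) (RB LB : rel B) (RA1 : rel A1) (RB1 LB1 : rel B1)
  (RA2 : rel A2) (RB2 LB2 : rel B2).
Hypotheses (hRA1 : forall x x', RA (e1 x) (e1 x') = RA1 x x')
  (hRA2 : forall y y', RA (e2 y) (e2 y') = RA2 y y')
  (hRB1 : forall a b, RB (d1 a) (d1 b) = RB1 a b)
  (hRB2 : forall a b, RB (d2 a) (d2 b) = RB2 a b)
  (hLB1 : forall a b, LB (d1 a) (d1 b) = LB1 a b)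
  (hLB2 : forall a b, LB (d2 a) (d2 b) = LB2 a b).

Definition cross21 (g1 : {ffun A1 -> B1}) (g2 : {ffun A2 -> B2}) :=
  [forall y, forall x, (RA (e2 y) (e1 x) ==> LB (d2 (g2 y)) (d1 (g1 x))) &&
                       (RB (d2 (g2 y)) (d1 (g1 x)) ==> RA (e2 y) (e1 x))].

Lemma cond_merge (g1 : {ffun A1 -> B1}) (g2 : {ffun A2 -> B2}) :
  (forall x y, (RA (e1 x) (e2 y) -> LB (d1 (g1 x)) (d2 (g2 y))) /\
               (RB (d1 (g1 x)) (d2 (g2 y)) -> RA (e1 x) (e2 y))) ->
  cond RA RB LB (mrg g1 g2) =
  [&& cond RA1 RB1 LB1 g1, cond RA2 RB2 LB2 g2 & cross21 g1 g2].
Proof.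
move=> C12; apply/idP/idP.
  case/condP => H1 H2; apply/and3P; split.
  - apply/condP; split => x x'.
      rewrite -hRA1 -hLB1 -!(merge1 g1 g2); exact: H1.
    rewrite -hRA1 -hRB1 -!(merge1 g1 g2); exact: H2.
  - apply/condP; split => x x'.
      rewrite -hRA2 -hLB2 -!(merge2 g1 g2); exact: H1.
    rewrite -hRA2 -hRB2 -!(merge2 g1 g2); exact: H2.
  - apply/forallP => y; apply/forallP => x; apply/andP; split; apply/implyP;
      rewrite -(merge1 g1 g2) -(merge2 g1 g2); [exact: H1 | exact: H2].
case/and3P => /condP [c11 c12] /condP [c21 c22] /forallP c3.
apply/condP; split => a b;
  case: (cover a) => [[x <-]|[y <-]]; case: (cover b) => [[x' <-]|[y' <-]];
  rewrite ?merge1 ?merge2.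
- by rewrite hRA1 hLB1; apply: c11.
- by case: (C12 x y').
- by move/forallP: (c3 y) => /(_ x') /andP [/implyP].
- by rewrite hRA2 hLB2; apply: c21.
- by rewrite hRA1 hRB1; apply: c12.
- by case: (C12 x y').
- by move/forallP: (c3 y) => /(_ x') /andP [_ /implyP].
- by rewrite hRA2 hRB2; apply: c22.
Qed.

End CondMerge.

Variables (P : {ffun A -> B} -> bool) (P1 : {ffun A1 -> B1} -> bool) (P2 : {ffun A2 -> B2} -> bool).
Hypothesis HP : forall g1 g2, bijb g1 -> bijb g2 -> P (mrg g1 g2) = P1 g1 && P2 g2.

Lemma split_card :
  #|[pred f : {ffun A -> B} | [&& bijb f, [forall a, DB (f a) == DA a] & P f]]| =
  #|[pred g | bijb g && P1 g]| * #|[pred g | bijb g && P2 g]|.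
Proof.
pose X1 := [set g : {ffun A1 -> B1} | bijb g && P1 g].
pose X2 := [set g : {ffun A2 -> B2} | bijb g && P2 g].
transitivity #|(fun p => mrg p.1 p.2) @: setX X1 X2|; last first.
  by rewrite (card_imset _ merge_inj) cardsX !cardsE.
apply: eq_card => f; rewrite inE; apply/idP/imsetP.
  case/and3P => /bijbP [fi fs] /forallP fD Pf.
  have [g1 Hg1] : exists g : A1 -> B1, forall x, d1 (g x) = f (e1 x).
    apply: (@fin_all_exists _ (fun _ => B1) (fun x z => d1 z = f (e1 x))) => x; apply: dC1; by rewrite (eqP (fD _)) e1D.
  have [g2 Hg2] : exists g : A2 -> B2, forall y, d2 (g y) = f (e2 y).
    apply: (@fin_all_exists _ (fun _ => B2) (fun x z => d2 z = f (e2 x))) => y; apply: dC2; by rewrite (eqP (fD _)) e2D.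
  have Ef : mrg (finfun g1) (finfun g2) = f.
    apply/ffunP => a; case: (cover a) => [[x <-]|[y <-]];
      by rewrite ?merge1 ?merge2 ffunE.
  have b1 : bijb (finfun g1).
    apply/bijbP; split.
      by move=> x x'; rewrite !ffunE => /(congr1 d1); rewrite !Hg1 => /fi /e1i.
    move=> z; case: (fs (d1 z)) => a fa.
    have : DA a by rewrite -(eqP (fD a)) fa d1D.
    case/eC1 => x ex; exists x; apply: d1i; by rewrite ffunE Hg1 ex.
  have b2 : bijb (finfun g2).
    apply/bijbP; split.
      by move=> x x'; rewrite !ffunE => /(congr1 d2); rewrite !Hg2 => /fi /e2i.
    move=> z; case: (fs (d2 z)) => a fa.
    have : ~~ DA a by rewrite -(eqP (fD a)) fa d2D.
    case/eC2 => x ex; exists x; apply: d2i; by rewrite ffunE Hg2 ex.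
  exists (finfun g1, finfun g2) => //.
  rewrite !inE /= b1 b2 /=; by rewrite -HP // Ef.
case=> [[g1 g2]]; rewrite !inE /= => /andP [/andP [b1 p1] /andP [b2 p2]] ->.
apply/and3P; split; [exact: merge_bij| |by rewrite HP // p1 p2].
apply/forallP => a; case: (cover a) => [[x <-]|[y <-]]; rewrite ?merge1 ?merge2.
  by rewrite d1D e1D.
by rewrite (negbTE (d2D _)) (negbTE (e2D _)).
Qed.

End Split.

Lemma prefix_cons (x y : nat) s1 s2 : prefix (x :: s1) (y :: s2) = (x == y) && prefix s1 s2.
Proof. by []. Qed.

Lemma prefix_antisym (a b : seq nat) : prefix a b -> prefix b a -> a = b.
Proof.
elim: a b => [|x a IH] [|y b] //=.
by case/andP => /eqP -> /IH H /andP [_ /H ->].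
Qed.

Lemma prefix_catr (v a b : seq nat) : prefix (v ++ a) (v ++ b) = prefix a b.
Proof. by elim: v => //= x v IH; rewrite eqxx. Qed.

Lemma prefix_size_eq (a b : seq nat) : prefix a b -> size a = size b -> a = b.
Proof.
elim: a b => [|x a IH] [|y b] //= /andP [/eqP -> P] [E]; by rewrite (IH _ P E).
Qed.

Lemma addr_ltE a b : addr_lt a b = (a != b) && prefix a b.
Proof.
rewrite /addr_lt; case P: (prefix a b); rewrite ?andbF ?andbT //.
case: eqVneq => [->|ne]; first by rewrite ltnn.
rewrite ltn_neqAle size_prefix // andbT; apply/negP => /eqP E.
by case/eqP: ne; apply: prefix_size_eq.
Qed.

Lemma prefix_lt a b : prefix a b = (a == b) || addr_lt a b.
Proof. by rewrite addr_ltE; case: eqP => // ->; rewrite prefix_refl. Qed.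

Lemma addr_lt_trans : transitive addr_lt.
Proof.
move=> b a c /andP [s1 p1] /andP [s2 p2]; apply/andP; split.
  exact: ltn_trans s2.
exact: prefix_trans p2.
Qed.

Lemma addr_lt_irr a : addr_lt a a = false.
Proof. by rewrite /addr_lt ltnn. Qed.

Lemma prefix_total (a b c : seq nat) : prefix a c -> prefix b c -> prefix a b || prefix b a.
Proof.
elim: c a b => [|z c IH] [|x a] [|y b] //=.
by case/andP => /eqP -> /IH H /andP [/eqP -> /H]; rewrite eqxx.
Qed.

Lemma addr_lt_nil a : addr_lt [::] a = (a != [::]).
Proof. by case: a. Qed.

Lemma addr_lt_niln a : addr_lt a [::] = false.
Proof. by rewrite /addr_lt ltn0. Qed.

Lemma addr_lt_cons i a b : addr_lt (i :: a) (i :: b) = addr_lt a b.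
Proof. by rewrite /addr_lt /= eqxx. Qed.

Lemma addr_lt_catl v a b : addr_lt (v ++ a) (v ++ b) = addr_lt a b.
Proof. by rewrite /addr_lt !size_cat ltn_add2l prefix_catr. Qed.

Definition sh (i : nat) (w : seq nat) : seq nat :=
  if w is k :: z then (if k < i then k else k.+1) :: z else [::].

Lemma sh_inj i : injective (sh i).
Proof.
move=> [|k z] [|k' z'] //= [E ->]; congr cons.
by move: E; case: (ltnP k i); case: (ltnP k' i) => ? ? E; lia.
Qed.

Lemma sh_head i k : (if k < i then k else k.+1) != i.
Proof. case: ltnP => ?; apply/eqP; lia. Qed.

Lemma addr_lt_sh i a b : addr_lt (sh i a) (sh i b) = addr_lt a b.
Proof.
rewrite /addr_lt; case: a => [|k z]; case: b => [|k' z'] //=.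
congr (_ && (_ && _)); apply/eqP/eqP => [E|-> //].
have := @sh_inj i (k :: z) (k' :: z); rewrite /= E => /(_ erefl); by case.
Qed.

Lemma addr_lt_cons_sh i a b : addr_lt (i :: a) (sh i b) = false.
Proof. case: b => [|k z] //; by rewrite /addr_lt /= eq_sym (negbTE (sh_head _ _)) andbF. Qed.

Lemma addr_lt_sh_cons i a b : addr_lt (sh i a) (i :: b) = (a == [::]).
Proof. case: a => [|k z] //; by rewrite /addr_lt /= (negbTE (sh_head _ _)) andbF. Qed.

(* bmp v : shift the children of vertex v up by one *)
Fixpoint bmp (v w : seq nat) {struct w} : seq nat :=
  match v, w with
  | [::], [::] => [::]
  | [::], k :: z => k.+1 :: z
  | i :: v', [::] => [::]
  | i :: v', k :: z => k :: (if k == i then bmp v' z else z)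
  end.

Lemma size_bump v w : size (bmp v w) = size w.
Proof. by elim: w v => [|k z IH] [|i v] //=; case: eqP => //= _; rewrite IH. Qed.

Lemma prefix_bump v a b : prefix (bmp v a) (bmp v b) = prefix a b.
Proof.
elim: a v b => [|k z IH] [|i v] [|k' z'] //=.
case: (eqVneq k k') => [<-|ne]; rewrite ?eqxx ?(negbTE ne) //=.
by case: eqP => // _; rewrite IH.
Qed.

Lemma bump_inj v : injective (bmp v).
Proof.
move=> a b E; apply: prefix_antisym; by rewrite -(prefix_bump v) E prefix_refl.
Qed.

Lemma addr_lt_bump v a b : addr_lt (bmp v a) (bmp v b) = addr_lt a b.
Proof. by rewrite /addr_lt !size_bump prefix_bump. Qed.

Lemma prefix_rcons0_bump v b : prefix (rcons v 0) (bmp v b) = false.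
Proof.
elim: v b => [|i v IH] [|k z] //=.
case: (i =P k) => [<-|//]; by rewrite eqxx /= IH.
Qed.

Lemma prefix_rcons0_cat v a : prefix (rcons v 0) (v ++ 0 :: a).
Proof. by rewrite -cats1 prefix_catr /= ?eqxx prefix0s. Qed.

Lemma addr_lt_graft_bump v a b : addr_lt (v ++ 0 :: a) (bmp v b) = false.
Proof.
apply/negbTE/negP => /andP [_ P].
have H := @prefix_trans _ (v ++ 0 :: a) _ _ (prefix_rcons0_cat v a) P.
by rewrite prefix_rcons0_bump in H.
Qed.

Lemma prefix_bump_graft v a b : prefix (bmp v a) (v ++ 0 :: b) = prefix a v.
Proof.
elim: v a => [|i v IH] [|k z] /=; rewrite ?prefix0s //.
case: (k =P i) => //= _; exact: IH.
Qed.

Lemma addr_lt_bump_graft v a b : addr_lt (bmp v a) (v ++ 0 :: b) = prefix a v.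
Proof.
rewrite /addr_lt prefix_bump_graft size_bump size_cat /=.
case P: (prefix a v); rewrite ?andbF // andbT.
by rewrite addnS ltnS (leq_trans (size_prefix P)) // leq_addr.
Qed.


Fixpoint vgo (i : nat) (l : seq ptree) : seq (seq nat) :=
  match l with [::] => [::] | s :: r => map (cons i) (verts s) ++ vgo i.+1 r end.

Lemma vertsE l : verts (Node l) = [::] :: vgo 0 l.
Proof. by []. Qed.

Lemma mem_map_cons (i k : nat) (z : seq nat) L : (k :: z \in map (cons i) L) = (k == i) && (z \in L).
Proof.
apply/mapP/andP => [[z' zL [-> ->]]|[/eqP -> zL]]; last by exists z.
by rewrite eqxx.
Qed.

Lemma mem_vgo i0 l w : (w \in vgo i0 l) =
  if w is k :: z then (i0 <= k) && (k - i0 < size l) && (z \in verts (nth pbullet l (k - i0)))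
  else false.
Proof.
elim: l i0 => [|s r IH] i0 /=; first by case: w => // k z; rewrite ltn0 andbF.
rewrite mem_cat IH; case: w {IH} => [|k z] //; first by rewrite orbF; apply/negbTE/mapP => [[]].
rewrite mem_map_cons.
case: (eqVneq k i0) => [->|ne] /=.
  by rewrite ltnn subnn /= orbF leqnn.
case: (ltnP i0 k) => H /=.
  have -> : k - i0 = (k - i0.+1).+1 by lia.
  by rewrite (ltnW H) /= ltnS.
have -> : (i0 <= k) = false by apply/negbTE; rewrite -ltnNge ltn_neqAle ne H.
by [].
Qed.

Lemma mem_verts_node l w : (w \in verts (Node l)) =
  if w is k :: z then (k < size l) && (z \in verts (nth pbullet l k)) else true.
Proof.
rewrite vertsE in_cons mem_vgo; case: w => [|k z] //=.
by rewrite subn0.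
Qed.

Lemma root_verts t : [::] \in verts t.
Proof. by case: t => l; rewrite mem_verts_node. Qed.

Fixpoint psize (t : ptree) : nat := let: Node l := t in (sumn (map psize l)).+1.

Lemma psize_gt0 t : 0 < psize t.
Proof. by case: t. Qed.

Lemma psize_head t1 r : psize t1 < psize (Node (t1 :: r)).
Proof. by rewrite /= ltnS leq_addr. Qed.

Lemma psize_tail t1 r : psize (Node r) < psize (Node (t1 :: r)).
Proof. by rewrite /= ltnS -addn1 addnC leq_add2r psize_gt0. Qed.

Lemma psize_nth l i : i < size l -> psize (nth pbullet l i) < psize (Node l).
Proof.
elim: l i => [|s r IH] [|i] //= H.
  by rewrite ltnS leq_addr.
have := IH i H; rewrite /= !ltnS => H'; by rewrite (leq_trans H') // leq_addl.
Qed.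

Lemma vgo_head i0 l w : w \in vgo i0 l -> if w is k :: _ then i0 <= k else false.
Proof. by rewrite mem_vgo; case: w => // k z /andP [/andP [->]]. Qed.

Lemma uniq_verts t : uniq (verts t).
Proof.
move: {2}(psize t) (leqnn (psize t)) => n; elim: n t => [|n IHn] [l] Hs; first by [].
rewrite /= in Hs.
have IH : forall s, s \in l -> uniq (verts s).
  move=> s sl; apply: IHn; rewrite -ltnS (leq_trans _ Hs) //.
  elim: l sl {Hs} => // a r IHr; rewrite in_cons => /orP [/eqP ->|/IHr H].
    by rewrite /= ltnS leq_addr.
  by rewrite (leq_trans H) //= ltnS leq_addl.
rewrite vertsE /= ; apply/andP; split.
  by apply/negP => /vgo_head.
elim: l 0 IH {Hs} => [|s r IHr] i0 IH //=.
rewrite cat_uniq map_inj_uniq ?IH ?mem_head //=; last by move=> a b [].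
rewrite IHr; last by move=> u ur; apply: IH; rewrite in_cons ur orbT.
rewrite andbT; apply/hasPn => w /vgo_head; case: w => // k z Hk.
by apply/mapP => [[z' _ [E _]]]; move: Hk; rewrite E ltnn.
Qed.

Definition vemb (t t' : ptree) (f : seq nat -> seq nat)
  (Hf : forall w, w \in verts t -> f w \in verts t') : V t -> V t' :=
  fun x => SeqSub (Hf (ssval x) (ssvalP x)).

Lemma vembE t t' f Hf x : ssval (@vemb t t' f Hf x) = f (ssval x).
Proof. by []. Qed.

Lemma vemb_inj t t' f Hf : injective f -> injective (@vemb t t' f Hf).
Proof. move=> fi x y /(congr1 (@ssval _ _)); rewrite !vembE => /fi; exact: val_inj. Qed.

Definition vroot t : V t := SeqSub (root_verts t).

Definition del (i : nat) (l : seq ptree) := take i l ++ drop i.+1 l.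

Lemma size_del i l : i < size l -> size (del i l) = (size l).-1.
Proof. move=> H; rewrite /del size_cat size_take size_drop H; lia. Qed.

Lemma nth_del i l k : nth pbullet (del i l) k = nth pbullet l (if k < i then k else k.+1).
Proof.
case: (ltnP i (size l)) => Hi; last first.
  rewrite /del take_oversize // drop_oversize ?cats0; last lia.
  case: ltnP => // Hk; rewrite !nth_default //; lia.
rewrite /del nth_cat size_take Hi.
case: ltnP => Hk; first by rewrite nth_take.
rewrite nth_drop; congr (nth _ _ _); lia.
Qed.

Lemma rs1P l i w : i < size l -> w \in verts (nth pbullet l i) -> i :: w \in verts (Node l).
Proof. by move=> H1 H2; rewrite mem_verts_node H1. Qed.

Lemma mem_sh l i w : i < size l -> (sh i w \in verts (Node l)) = (w \in verts (Node (del i l))).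
Proof.
move=> Hi; rewrite !mem_verts_node; case: w => [|k z] //=.
rewrite size_del // nth_del; congr andb; case: (ltnP k i) => H; apply/idP/idP => ?; lia.
Qed.

Lemma rs_cover l i w : i < size l -> w \in verts (Node l) ->
  (if w is k :: _ then k == i else false) = false ->
  exists2 w', w = sh i w' & w' \in verts (Node (del i l)).
Proof.
move=> Hi Hw; case: w Hw => [|k z] Hw Hk; first by exists [::].
exists ((if k < i then k else k.-1) :: z).
  rewrite /=; congr cons; move/negbT: Hk => /eqP Hk; case: (ltnP k i) => H1; case: ltnP => H2 //; lia.
rewrite -(mem_sh _ Hi) /=; suff -> : (if (if k < i then k else k.-1) < i then if k < i then k else k.-1
   else (if k < i then k else k.-1).+1) = k by [].
move/negbT: Hk => /eqP Hk; case: (ltnP k i) => H1; case: ltnP => H2 //; lia.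
Qed.

Definition gl (x : ptree) (i : nat) (v' : seq nat) (l : seq ptree) :=
  map (fun j => if j == i then graft x v' (nth pbullet l j) else nth pbullet l j) (iota 0 (size l)).

Lemma allpairs1 (f : nat -> ptree -> ptree) (g : nat -> ptree) s :
  [seq f j c | j <- s, c <- [:: g j]] = [seq f j (g j) | j <- s].
Proof. by elim: s => //= a s ->. Qed.

Lemma graft_cons x i v' l : graft x (i :: v') (Node l) = Node (gl x i v' l).
Proof. rewrite /=; congr Node; rewrite /gl; by elim: (iota 0 (size l)) => //= a s ->. Qed.

Lemma graft_nil x l : graft x [::] (Node l) = Node (x :: l).
Proof. by []. Qed.

Lemma size_gl x i v' l : size (gl x i v' l) = size l.
Proof. by rewrite size_map size_iota. Qed.

Lemma nth_gl x i v' l k : k < size l ->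
  nth pbullet (gl x i v' l) k = if k == i then graft x v' (nth pbullet l k) else nth pbullet l k.
Proof. move=> H; by rewrite (nth_map 0) ?size_iota // nth_iota. Qed.

Lemma mem_graft1 x v y w : v \in verts y ->
  (v ++ 0 :: w \in verts (graft x v y)) = (w \in verts x).
Proof.
elim: v y => [|i v IH] [l] Hv.
  by rewrite graft_nil mem_verts_node.
rewrite graft_cons mem_verts_node size_gl.
move: Hv; rewrite mem_verts_node => /andP [Hi Hv].
by rewrite /= Hi nth_gl // eqxx IH.
Qed.

Lemma mem_graft2 x v y w : v \in verts y ->
  (bmp v w \in verts (graft x v y)) = (w \in verts y).
Proof.
elim: v y w => [|i v IH] [l] w Hv.
  by case: w => [|k z]; rewrite graft_nil !mem_verts_node.
case: w => [|k z]; first by rewrite !mem_verts_node.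
rewrite graft_cons !mem_verts_node size_gl /=.
move: Hv; rewrite mem_verts_node => /andP [Hi Hv].
case: (ltnP k (size l)) => Hk //=.
rewrite nth_gl //; case: (k =P i) => [E|//]; subst k; exact: IH.
Qed.

Lemma cover_graft x v y w : v \in verts y -> w \in verts (graft x v y) ->
  (exists2 z, w = v ++ 0 :: z & z \in verts x) \/ (exists2 z, w = bmp v z & z \in verts y).
Proof.
elim: v y w => [|i v IH] [l] w Hv.
  rewrite graft_nil mem_verts_node; case: w => [|[|k] z].
  - by move=> _; right; exists [::]; rewrite ?root_verts.
  - by case/andP => _ H; left; exists z.
  - by case/andP => H1 H2; right; exists (k :: z) => //; rewrite mem_verts_node -ltnS H1.
rewrite graft_cons mem_verts_node size_gl.
move: (Hv); rewrite mem_verts_node => /andP [Hi Hv'].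
case: w => [|k z]; first by move=> _; right; exists [::]; rewrite ?root_verts.
case/andP => Hk; rewrite nth_gl //.
case: (k =P i) => [E|ne] Hz.
  subst k; case: (IH _ _ Hv' Hz) => [[z' -> Hz']|[z' -> Hz']].
    by left; exists z'.
  right; exists (i :: z'); first by rewrite /= eqxx.
  by rewrite mem_verts_node Hk.
right; exists (k :: z); first by rewrite /=; case: eqP.
by rewrite mem_verts_node Hk.
Qed.

Lemma vltE t (a b : V t) : vlt a b = addr_lt (ssval a) (ssval b).
Proof. by []. Qed.

Lemma V_inj t (a b : V t) : ssval a = ssval b -> a = b.
Proof. exact: val_inj. Qed.

Section Top.
Variables (t1 : ptree) (r : seq ptree).
Local Notation tau := (Node (t1 :: r)).

Lemma top1P w : w \in verts t1 -> 0 :: w \in verts tau.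
Proof. by rewrite mem_verts_node. Qed.

Lemma top2P w : w \in verts (Node r) -> sh 0 w \in verts tau.
Proof. by rewrite (@mem_sh (t1 :: r) 0 w (ltn0Sn _)) /del /= drop0. Qed.

Definition top1 : V t1 -> V tau := vemb top1P.
Definition top2 : V (Node r) -> V tau := vemb top2P.
Definition topD (b : V tau) : bool := if ssval b is k :: _ then k == 0 else false.

Lemma top1_inj : injective top1.
Proof. by apply: vemb_inj => a b []. Qed.
Lemma top2_inj : injective top2.
Proof. apply: vemb_inj; exact: sh_inj. Qed.
Lemma top1D x : topD (top1 x). Proof. by []. Qed.
Lemma top2D y : ~~ topD (top2 y).
Proof. by rewrite /topD vembE; case: (ssval y). Qed.
Lemma mem_top1 z : 0 :: z \in verts tau -> z \in verts t1.
Proof. by rewrite mem_verts_node. Qed.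

Lemma top1C b : topD b -> exists x, top1 x = b.
Proof.
case: b => w Hw; rewrite /topD /=; case: w Hw => [|[|k] z] // Hw _.
have Hz := mem_top1 Hw.
by exists (SeqSub Hz); apply: V_inj.
Qed.
Lemma top2C b : ~~ topD b -> exists y, top2 y = b.
Proof.
case: b => w Hw; rewrite /topD /= => Hk.
have [w' E Hw'] := @rs_cover (t1 :: r) 0 w (ltn0Sn (size r)) Hw (negbTE Hk).
have Hw'' : w' \in verts (Node r) by move: Hw'; rewrite /del /= drop0.
by exists (SeqSub Hw''); apply: V_inj; rewrite vembE /= E.
Qed.

Lemma vlt_top11 a b : vlt (top1 a) (top1 b) = vlt a b.
Proof. by rewrite !vltE !vembE addr_lt_cons. Qed.
Lemma vlt_top22 a b : vlt (top2 a) (top2 b) = vlt a b.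
Proof. by rewrite !vltE !vembE addr_lt_sh. Qed.
Lemma vlt_top12 a b : vlt (top1 a) (top2 b) = false.
Proof. by rewrite !vltE !vembE addr_lt_cons_sh. Qed.
Lemma vlt_top21 a b : vlt (top2 a) (top1 b) = (ssval a == [::]).
Proof. by rewrite !vltE !vembE addr_lt_sh_cons. Qed.

Lemma lll_top11 a b : lll tau (ssval (top1 a)) (ssval (top1 b)) = lll t1 (ssval a) (ssval b).
Proof. by []. Qed.
Lemma lll_top22 a b : lll tau (ssval (top2 a)) (ssval (top2 b)) = lll (Node r) (ssval a) (ssval b).
Proof. by rewrite !vembE; case: (ssval a) => [|? ?]; case: (ssval b) => [|? ?]. Qed.
Lemma lll_top12 a b : lll tau (ssval (top1 a)) (ssval (top2 b)) = false.
Proof. by rewrite !vembE; case: (ssval b) => [|? ?]. Qed.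
Lemma lll_top21 a b : lll tau (ssval (top2 a)) (ssval (top1 b)) = true.
Proof. by rewrite !vembE; case: (ssval a) => [|? ?]. Qed.

End Top.

Lemma lll_nil l w : lll (Node l) w [::] = false.
Proof.
elim: l w => [|s l IH] w //=.
case: w => [|[|k] z] //=; exact: IH.
Qed.

Section Graft.
Variables (x y : ptree) (v : seq nat) (Hv : v \in verts y).
Local Notation G := (graft x v y).

Lemma gr1P w : w \in verts x -> v ++ 0 :: w \in verts G.
Proof. by rewrite mem_graft1. Qed.
Lemma gr2P w : w \in verts y -> bmp v w \in verts G.
Proof. by rewrite mem_graft2. Qed.

Definition gr1 : V x -> V G := vemb gr1P.
Definition gr2 : V y -> V G := vemb gr2P.
Definition grD (b : V G) : bool := prefix (rcons v 0) (ssval b).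

Lemma gr1_inj : injective gr1.
Proof. apply: vemb_inj => a b /eqP; by rewrite eqseq_cat // => /andP [_ /eqP []]. Qed.
Lemma gr2_inj : injective gr2.
Proof. apply: vemb_inj; exact: bump_inj. Qed.
Lemma gr1D a : grD (gr1 a).
Proof. by rewrite /grD vembE prefix_rcons0_cat. Qed.
Lemma gr2D a : ~~ grD (gr2 a).
Proof. by rewrite /grD vembE prefix_rcons0_bump. Qed.
Lemma gr1C b : grD b -> exists a, gr1 a = b.
Proof.
case: b => w Hw; rewrite /grD /= => Hp.
case: (cover_graft Hv Hw) => [[z E Hz]|[z E Hz]].
  by exists (SeqSub Hz); apply: V_inj; rewrite vembE /= E.
by rewrite E prefix_rcons0_bump in Hp.
Qed.
Lemma gr2C b : ~~ grD b -> exists a, gr2 a = b.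
Proof.
case: b => w Hw; rewrite /grD /= => Hp.
case: (cover_graft Hv Hw) => [[z E Hz]|[z E Hz]].
  by rewrite E prefix_rcons0_cat in Hp.
by exists (SeqSub Hz); apply: V_inj; rewrite vembE /= E.
Qed.

Lemma vlt_gr11 a b : vlt (gr1 a) (gr1 b) = vlt a b.
Proof. by rewrite !vltE !vembE addr_lt_catl addr_lt_cons. Qed.
Lemma vlt_gr22 a b : vlt (gr2 a) (gr2 b) = vlt a b.
Proof. by rewrite !vltE !vembE addr_lt_bump. Qed.
Lemma vlt_gr12 a b : vlt (gr1 a) (gr2 b) = false.
Proof. by rewrite !vltE !vembE addr_lt_graft_bump. Qed.
Lemma vlt_gr21 a b : vlt (gr2 a) (gr1 b) = prefix (ssval a) v.
Proof. by rewrite !vltE !vembE addr_lt_bump_graft. Qed.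
End Graft.

Definition lllV t : rel (V t) := fun a b => lll t (ssval a) (ssval b).

Record treeord (A : finType) (R : rel A) (rho : A) : Prop := TreeOrd {
  tirr : irreflexive R; ttr : transitive R;
  troot : forall x, x != rho -> R rho x;
  tchain : forall a b c, R a c -> R b c -> [|| a == b, R a b | R b a] }.

Definition splitSub (A : finType) (D : pred A) : splt A :=
  @MkSplt A D {a : A | D a} {a : A | ~~ D a} val val val_inj val_inj
    (fun x => valP x) (fun y => valP y)
    (fun a H => ex_intro _ (exist _ a H) erefl)
    (fun a H => ex_intro _ (exist _ a H) erefl).

Definition topSplit t1 r : splt (V (Node (t1 :: r))) :=
  @MkSplt _ (@topD t1 r) (V t1) (V (Node r)) (@top1 t1 r) (@top2 t1 r)
   (@top1_inj t1 r) (@top2_inj t1 r) (@top1D t1 r) (@top2D t1 r) (@top1C t1 r) (@top2C t1 r).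

Definition grSplit x y v (Hv : v \in verts y) : splt (V (graft x v y)) :=
  @MkSplt _ (@grD x y v) (V x) (V y) (@gr1 x y v Hv) (@gr2 x y v Hv)
   (@gr1_inj x y v Hv) (@gr2_inj x y v Hv) (@gr1D x y v Hv) (@gr2D x y v Hv)
   (@gr1C x y v Hv) (@gr2C x y v Hv).

Lemma bt_partition (A B : finType) (RA : rel A) (RB LB : rel B) (b0 : B) :
  bt RA RB LB = \sum_(u : A) #|[pred f : {ffun A -> B} | [&& bijb f, cond RA RB LB f & f u == b0]]|.
Proof.
rewrite btE (@card_partition_pt _ _ _ b0); last by move=> f /andP [].
apply: eq_bigr => u _; apply: eq_card => f; by rewrite !inE andbA.
Qed.

Lemma bt_empty (A B : finType) (RA : rel A) (RB LB : rel B) (b : B) :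
  #|A| = 0 -> bt RA RB LB = 0.
Proof.
move=> A0; rewrite btE; apply: eq_card0 => f; rewrite inE.
apply/negbTE/negP => /andP [/bijbP [_ fs] _]; case: (fs b) => a _.
by move: A0; rewrite (cardD1 a).
Qed.

Section Step.
Variables (A : finType) (R : rel A) (rho : A) (HT : treeord R rho).

Lemma Rtr a b c : R a b -> R b c -> R a c.
Proof. move=> h1 h2; exact: (@ttr _ _ _ HT b a c h1 h2). Qed.

Lemma Rirr a : R a a = false.
Proof. exact: (tirr HT). Qed.

Definition Du u : pred A := fun a => (a == u) || R u a.

Lemma Du_refl u : Du u u.
Proof. by rewrite /Du eqxx. Qed.

Definition R1 u : rel {a : A | Du u a} := fun a b => R (val a) (val b).
Definition R2 u : rel {a : A | ~~ Du u a} := fun a b => R (val a) (val b).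
Arguments R1 u : clear implicits.
Arguments R2 u : clear implicits.

Lemma Du_cross u a b : Du u a -> ~~ Du u b -> R a b = false.
Proof.
case/orP => [/eqP ->|Rua] nb; apply/negbTE/negP => Rab; case/negP: nb; rewrite /Du.
  by rewrite Rab orbT.
by rewrite (Rtr Rua Rab) orbT.
Qed.

Lemma Du_below u a b : ~~ Du u a -> Du u b -> R a b = R a u.
Proof.
move=> na; case/orP => [/eqP -> //|Rub]; apply/idP/idP => [Rab|Rau]; last exact: Rtr Rau Rub.
case/or3P: (tchain HT Rab Rub) => [/eqP E|//|Rua].
  by case/negP: na; rewrite E /Du eqxx.
by case/negP: na; rewrite /Du Rua orbT.
Qed.

Lemma rho_Dc u : u != rho -> ~~ Du u rho.
Proof.
move=> ne; rewrite /Du eq_sym (negbTE ne) /=; apply/negP => Rur.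
by have := Rtr Rur (troot HT ne); rewrite Rirr.
Qed.

Lemma Dc_rho u : ~~ Du rho u = false.
Proof. by rewrite /Du; case: eqVneq => //= ne; rewrite (troot HT ne). Qed.

Lemma Dc_neq u a : ~~ Du u a -> u != rho.
Proof. move=> H; apply/eqP => E; subst u; by rewrite Dc_rho in H. Qed.

Lemma card_Dc_rho : #|{: {a : A | ~~ Du rho a}}| = 0.
Proof. apply: eq_card0 => [[a Ha]]; exfalso; by rewrite Dc_rho in Ha. Qed.

Lemma treeord1 (u : A) : treeord (R1 u) (exist _ u (Du_refl u)).
Proof.
split.
- by move=> a; exact: Rirr.
- by move=> b a c; exact: Rtr.
- move=> [x Hx] ne; rewrite /R1 /=; case/orP: (Hx) => // /eqP E.
  by case/eqP: ne; apply: val_inj.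
- move=> [a Ha] [b Hb] [c Hc]; rewrite /R1 /= => h1 h2.
  case/or3P: (tchain HT h1 h2) => [/eqP E|->|->]; rewrite ?orbT //.
  by apply/orP; left; apply/eqP/val_inj.
Qed.

Lemma treeord2 (u : A) (H : u != rho) : treeord (R2 u) (exist _ rho (rho_Dc H)).
Proof.
split.
- by move=> a; exact: Rirr.
- by move=> b a c; exact: Rtr.
- move=> [x Hx] ne; rewrite /R2 /=; apply: (troot HT); apply/eqP => E.
  by case/eqP: ne; apply: val_inj.
- move=> [a Ha] [b Hb] [c Hc]; rewrite /R2 /= => h1 h2.
  case/or3P: (tchain HT h1 h2) => [/eqP E|->|->]; rewrite ?orbT //.
  by apply/orP; left; apply/eqP/val_inj.
Qed.

Section Top.
Variables (t1 : ptree) (r : seq ptree).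
Local Notation tau := (Node (t1 :: r)).
Definition c0 : V tau := top1 r (vroot t1).

Lemma topD_c0 : topD c0. Proof. by []. Qed.

Lemma lll_c0 w : lllV c0 w -> topD w.
Proof.
case D: (topD w) => //; have [y <-] := top2C (negbT D).
by rewrite /lllV lll_top12.
Qed.

Lemma vlt_c0 w : topD w -> w != c0 -> vlt c0 w.
Proof.
move=> D ne; have [a Ea] := top1C D; subst w.
rewrite vlt_top11 vltE /= addr_lt_nil; apply/negP => /eqP E.
by case/eqP: ne; congr top1; apply: val_inj.
Qed.

Lemma lhs_u u :
  #|[pred f : {ffun A -> V tau} | [&& bijb f, cond R (@vlt tau) (@lllV tau) f & f u == c0]]| =
  bt (R1 u) (@vlt t1) (@lllV t1) * bt (R2 u) (@vlt (Node r)) (@lllV (Node r)).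
Proof.
have HP : forall g1 g2, bijb g1 -> bijb g2 ->
   cond R (@vlt tau) (@lllV tau) (mrg (SA := splitSub (Du u)) (SB := topSplit t1 r) c0 g1 g2)
   = cond (R1 u) (@vlt t1) (@lllV t1) g1 && cond (R2 u) (@vlt (Node r)) (@lllV (Node r)) g2.
  move=> g1 g2 b1 b2.
  rewrite (@cond_merge A (V tau) (splitSub (Du u)) (topSplit t1 r) c0 R (@vlt tau) (@lllV tau)
             (R1 u) (@vlt t1) (@lllV t1) (R2 u) (@vlt (Node r)) (@lllV (Node r)) _ _ _ _ _ _ g1 g2).
  - congr andb; case C2: (cond _ _ _ g2); rewrite ?andbF //= /cross21.
    apply/forallP => y; apply/forallP => x; rewrite /= /lllV lll_top21 /=.
    rewrite implybT /= vlt_top21; apply/implyP => /eqP Ey.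
    have Eyr : val y = rho.
      apply/eqP; apply/negP => /negP ne.
      have urho : u != rho := Dc_neq (valP y).
      have /bijbP [_ fs] := b2.
      case/condP: C2 => H1 _.
      have := H1 (exist _ rho (rho_Dc urho)) y (troot HT ne).
      by rewrite /lllV Ey lll_nil.
    have urho := Dc_neq (valP y).
    rewrite Eyr; apply: (troot HT); apply/eqP => E; move: (valP x); rewrite /= E => Dr.
    by move: (rho_Dc urho); rewrite Dr.
  - by [].
  - by [].
  - by move=> a b; rewrite /= vlt_top11.
  - by move=> a b; rewrite /= vlt_top22.
  - by move=> a b; rewrite /= /lllV lll_top11.
  - by move=> a b; rewrite /= /lllV lll_top22.
  - move=> x y; rewrite /= vlt_top12 (Du_cross (valP x) (valP y)); by split.
rewrite !btE -(split_card HP); apply: eq_card => f; rewrite !inE /=.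
case Bf: (bijb f) => //; case Cf: (cond _ _ _ f); rewrite ?andbF //= andbT.
have /bijbP [fi fs] := Bf; have /condP [C1 C2] := Cf.
apply/eqP/forallP => [E a|H].
  case Da: (Du u a).
    case/orP: Da => [/eqP ->|Rua]; first by rewrite E.
    by have := C1 _ _ Rua; rewrite E => /lll_c0 ->.
  apply/eqP; apply/negbTE/negP => Dfa.
  case: (eqVneq (f a) c0) => [Efa|ne].
    have Eau : a = u by apply: fi; rewrite Efa E.
    by move: Da; rewrite Eau Du_refl.
  have := C2 u a; rewrite E => /(_ (vlt_c0 Dfa ne)) Rua.
  by move: Da; rewrite /Du Rua orbT.
have Du_u : topD (f u) by rewrite (eqP (H u)) Du_refl.
case: (eqVneq (f u) c0) => // ne.
have [a fa] := fs c0.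
have Da : Du u a by rewrite -(eqP (H a)) fa topD_c0.
case/orP: Da => [/eqP Eau|Rua]; first by move: ne; rewrite -fa Eau eqxx.
have Rau : R a u by apply: C2; rewrite fa; exact: vlt_c0.
by have := Rtr Rua Rau; rewrite Rirr.
Qed.

End Top.

Definition Jc u (v : seq nat) (y : ptree) (g : {ffun {a : A | ~~ Du u a} -> V y}) :=
  [forall a, R (val a) u == prefix (ssval (g a)) v].

Section GraftPart.
Variables (x y : ptree) (v : seq nat) (Hv : v \in verts y).
Local Notation G := (graft x v y).
Definition cg0 : V G := gr1 Hv (vroot x).

Lemma grD_cg0 : grD cg0. Proof. exact: gr1D. Qed.

Lemma vlt_cg0 w : grD w -> w != cg0 -> vlt cg0 w.
Proof.
move=> D ne; have [a Ea] := gr1C Hv D; subst w.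
rewrite vlt_gr11 vltE /= addr_lt_nil; apply/negP => /eqP E.
by case/eqP: ne; congr gr1; apply: val_inj.
Qed.

Lemma grD_of_vlt w : vlt cg0 w -> grD w.
Proof.
case D: (grD w) => //; have [z <-] := gr2C Hv (negbT D).
by rewrite vlt_gr12.
Qed.

Lemma rhs_u u :
  #|[pred f : {ffun A -> V G} | [&& bijb f, cond R (@vlt G) (@vlt G) f & f u == cg0]]| =
  bt (R1 u) (@vlt x) (@vlt x) *
  #|[pred g : {ffun {a : A | ~~ Du u a} -> V y} | bijb g && (cond (R2 u) (@vlt y) (@vlt y) g && Jc v g)]|.
Proof.
have HP : forall g1 g2, bijb g1 -> bijb g2 ->
   cond R (@vlt G) (@vlt G) (mrg (SA := splitSub (Du u)) (SB := @grSplit x y v Hv) cg0 g1 g2)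
   = cond (R1 u) (@vlt x) (@vlt x) g1 && (cond (R2 u) (@vlt y) (@vlt y) g2 && Jc v g2).
  move=> g1 g2 b1 b2.
  rewrite (@cond_merge A (V G) (splitSub (Du u)) (@grSplit x y v Hv) cg0 R (@vlt G) (@vlt G)
             (R1 u) (@vlt x) (@vlt x) (R2 u) (@vlt y) (@vlt y) _ _ _ _ _ _ g1 g2).
  - congr andb; congr andb; rewrite /cross21 /Jc; apply: eq_forallb => y'.
    apply/forallP/eqP => [H|E x'].
      move: (H (exist _ u (Du_refl u))) => /andP [/implyP h1 /implyP h2].
      rewrite /= vlt_gr21 in h1 h2; apply/idP/idP; [exact: h1|exact: h2].
    rewrite /= vlt_gr21 (Du_below (valP y') (valP x')) E.
    by case: prefix.
  - by [].
  - by [].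
  - by move=> a b; rewrite /= vlt_gr11.
  - by move=> a b; rewrite /= vlt_gr22.
  - by move=> a b; rewrite /= vlt_gr11.
  - by move=> a b; rewrite /= vlt_gr22.
  - move=> x' y'; rewrite /= vlt_gr12 (Du_cross (valP x') (valP y')); by split.
rewrite !btE -(split_card HP); apply: eq_card => f; rewrite !inE /=.
case Bf: (bijb f) => //; case Cf: (cond _ _ _ f); rewrite ?andbF //= andbT.
have /bijbP [fi fs] := Bf; have /condP [C1 C2] := Cf.
apply/eqP/forallP => [E a|H].
  case Da: (Du u a).
    case/orP: Da => [/eqP ->|Rua]; first by rewrite E grD_cg0.
    by have := C1 _ _ Rua; rewrite E => /grD_of_vlt ->.
  apply/eqP; apply/negbTE/negP => Dfa.
  case: (eqVneq (f a) cg0) => [Efa|ne].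
    have Eau : a = u by apply: fi; rewrite Efa E.
    by move: Da; rewrite Eau Du_refl.
  have := C2 u a; rewrite E => /(_ (vlt_cg0 Dfa ne)) Rua.
  by move: Da; rewrite /Du Rua orbT.
have Du_u : grD (f u) by rewrite (eqP (H u)) Du_refl.
case: (eqVneq (f u) cg0) => // ne.
have [a fa] := fs cg0.
have Da : Du u a by rewrite -(eqP (H a)) fa grD_cg0.
case/orP: Da => [/eqP Eau|Rua]; first by move: ne; rewrite -fa Eau eqxx.
have Rau : R a u by apply: C2; rewrite fa; exact: vlt_cg0.
by have := Rtr Rua Rau; rewrite Rirr.
Qed.

Lemma bt_graft :
  bt R (@vlt G) (@vlt G) = \sum_(u : A) bt (R1 u) (@vlt x) (@vlt x) *
  #|[pred g : {ffun {a : A | ~~ Du u a} -> V y} | bijb g && (cond (R2 u) (@vlt y) (@vlt y) g && Jc v g)]|.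
Proof. rewrite (bt_partition _ _ _ cg0); apply: eq_bigr => u _; exact: rhs_u. Qed.

End GraftPart.

Lemma sumJ u (y : ptree) :
  \sum_(w <- verts y) #|[pred g : {ffun {a : A | ~~ Du u a} -> V y} |
      bijb g && (cond (R2 u) (@vlt y) (@vlt y) g && Jc w g)]| = bt (R2 u) (@vlt y) (@vlt y).
Proof.
rewrite btE.
under eq_bigr do rewrite -sum1_card big_mkcond.
rewrite exchange_big -sum1_card [RHS]big_mkcond /=.
apply: eq_bigr => g _.
rewrite [in RHS]unfold_in; case BC: (bijb g && cond _ _ _ g) => /=; last first.
  by rewrite big1 // => w _; rewrite unfold_in /= andbA BC.
have {BC} /andP [/bijbP [gi gs] /condP [C1 C2]] := BC.
have [a0 _] := gs (vroot y).
have urho : u != rho := Dc_neq (valP a0).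
have [p Rpu pmax] := @arg_maxnP A rho (fun z => R z u) (fun z => #|[pred w | R w z]|) (troot HT urho).
have Hp : ~~ Du u p.
  apply/negP; case/orP => [/eqP E|Rup]; first by move: Rpu; rewrite E Rirr.
  by have := Rtr Rup Rpu; rewrite Rirr.
pose pp : {a : A | ~~ Du u a} := exist _ p Hp.
pose w0 := ssval (g pp).
have J0 : Jc w0 g.
  apply/forallP => a; rewrite /w0 prefix_lt -vltE.
  have -> : (ssval (g a) == ssval (g pp)) = (a == pp).
    apply/eqP/eqP => [E|-> //]; apply: gi; exact: val_inj.
  apply/eqP; apply/idP/idP => [Rau|].
    case/or3P: (tchain HT Rau Rpu) => [/eqP E|Rap|Rpa].
    - by apply/orP; left; apply/eqP/val_inj.
    - by apply/orP; right; apply: C1.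
    - have Hlt : #|[pred w | R w p]| < #|[pred w | R w (val a)]|.
        apply: proper_card; apply/properP; split.
          by apply/subsetP => w; rewrite !inE => Rwp; exact: Rtr Rwp Rpa.
        by exists p; rewrite !inE ?Rpa ?Rirr.
      have Hle : #|[pred w | R w (val a)]| <= #|[pred w | R w p]| := pmax _ Rau; lia.
  case/orP => [/eqP -> //|/C2 Rap]; exact: Rtr Rap Rpu.
have Jeq : forall w, w \in verts y -> Jc w g = (w == w0).
  move=> w wy; apply/idP/eqP => [Jw|->] //.
  have [a ga] := gs (SeqSub wy).
  move/forallP: (Jw) => /(_ a); rewrite ga /= prefix_refl => /eqP Rau.
  move/forallP: (J0) => /(_ a); rewrite ga /= Rau eq_sym => /eqP P1.
  move/forallP: (Jw) => /(_ pp); rewrite /= Rpu eq_sym => /eqP P2.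
  exact: prefix_antisym.
rewrite -big_mkcond /= sum1_count.
have -> : count (fun w => [&& bijb g, cond (R2 u) (@vlt y) (@vlt y) g & Jc w g]) (verts y) =
          count (pred1 w0) (verts y).
  apply: eq_in_count => w wy /=.
  have -> : bijb g by apply/bijbP.
  have -> : cond (R2 u) (@vlt y) (@vlt y) g by apply/condP.
  by rewrite /= Jeq.
by rewrite count_uniq_mem ?uniq_verts // (valP (g pp)).
Qed.
End Step.

Lemma psi_cons t1 r : Psi (Node (t1 :: r)) = graftL (Psi t1) (Psi (Node r)).
Proof. by []. Qed.
Lemma psi_nil : Psi (Node [::]) = [:: pbullet].
Proof. by []. Qed.

Lemma V_bullet (a : V (Node [::])) : ssval a = [::].
Proof. case: a => w Hw /=; move: Hw; rewrite mem_verts_node; by case: w. Qed.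

Lemma vlt_bullet (a b : V (Node [::])) : vlt a b = false.
Proof. by rewrite vltE !V_bullet. Qed.

Lemma claimA n : forall tau, psize tau <= n -> forall (A : finType) (R : rel A) (rho : A),
  treeord R rho ->
  bt R (@vlt tau) (@lllV tau) = \sum_(X <- Psi tau) bt R (@vlt X) (@vlt X).
Proof.
elim: n => [|n IHn] [l] Hs A R rho HT; first by [].
case: l Hs => [|t1 r] Hs.
  rewrite psi_nil big_seq1; apply: eq_card => f; rewrite !inE.
  congr (_ && (_ && (_ && _))); apply: eq_forallb => a; apply: eq_forallb => b.
    by rewrite vlt_bullet /lllV /=.
have Hs1 : psize t1 <= n by rewrite -ltnS (leq_trans (psize_head t1 r)).
have Hs2 : psize (Node r) <= n by rewrite -ltnS (leq_trans (psize_tail t1 r)).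
rewrite (bt_partition _ _ _ (c0 t1 r)).
under eq_bigr => u _ do rewrite (lhs_u HT t1 r u).
rewrite psi_cons /graftL big_flatten big_allpairs_dep.
transitivity (\sum_u \sum_(a <- Psi t1) \sum_(b <- Psi (Node r)) \sum_(v <- verts b)
   bt (@R1 A R u) (@vlt a) (@vlt a) *
   #|[pred g : {ffun {x : A | ~~ Du R u x} -> V b} |
       bijb g && (cond (@R2 A R u) (@vlt b) (@vlt b) g && Jc v g)]|).
  apply: eq_bigr => u _.
  rewrite (IHn t1 Hs1 _ _ _ (treeord1 HT u)).
  have E2 : bt (@R2 A R u) (@vlt (Node r)) (@lllV (Node r)) =
            \sum_(b <- Psi (Node r)) bt (@R2 A R u) (@vlt b) (@vlt b).
    case: (eqVneq u rho) => [Eu|ne].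
      subst u; rewrite (bt_empty _ _ _ (vroot _) (card_Dc_rho HT)) big1 // => b _.
      exact: (bt_empty _ _ _ (vroot _) (card_Dc_rho HT)).
    exact: (IHn _ Hs2 _ _ _ (treeord2 HT ne)).
  rewrite E2 big_distrl; apply: eq_bigr => a _; rewrite big_distrr; apply: eq_bigr => b _.
  by rewrite -(sumJ HT u b) big_distrr.
rewrite exchange_big; apply: eq_bigr => a _; rewrite exchange_big; apply: eq_bigr => b _.
rewrite big_map exchange_big [RHS]big_seq [LHS]big_seq; apply: eq_bigr => v Hv.
by rewrite (@bt_graft _ _ _ HT a b v Hv).
Qed.

Definition II (s X : ptree) := bt (@vlt s) (@vlt X) (@vlt X).

Lemma vroot_val t (a : V t) : (a == vroot t) = (ssval a == [::]).
Proof. apply/eqP/eqP => [->//|E]; exact: val_inj. Qed.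

Lemma treeord_V t : treeord (@vlt t) (vroot t).
Proof.
split.
- by move=> a; rewrite vltE addr_lt_irr.
- by move=> b a c; rewrite !vltE; exact: addr_lt_trans.
- by move=> a; rewrite vroot_val vltE addr_lt_nil.
- move=> a b c; rewrite !vltE => /andP [_ P1] /andP [_ P2].
  case/orP: (prefix_total P1 P2); rewrite prefix_lt => /orP [/eqP E|->]; rewrite ?orbT //.
  + by rewrite (val_inj E) eqxx.
  + by rewrite (val_inj E) eqxx.
Qed.

Lemma iso_of_pos (A B : finType) (RA : rel A) (RB LB : rel B) :
  0 < bt RA RB LB -> exists f : {ffun A -> B}, [/\ injective f, (forall y, exists x, f x = y),
    (forall a b, RA a b -> LB (f a) (f b)) & (forall a b, RB (f a) (f b) -> RA a b)].
Proof.
rewrite btE => /card_gt0P [f]; rewrite inE => /andP [/bijbP [fi fs] /condP [C1 C2]].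
by exists f; split.
Qed.

Lemma II_refl s : 0 < II s s.
Proof.
rewrite /II btE; apply/card_gt0P; exists [ffun a => a]; rewrite inE; apply/andP; split.
  apply/bijbP; split; first by move=> a b; rewrite !ffunE.
  by move=> y; exists y; rewrite ffunE.
by apply/condP; split => a b; rewrite !ffunE.
Qed.

Lemma II_transport s X : 0 < II s X -> 0 < II X s -> II s X = II s s.
Proof.
move=> /iso_of_pos [f [fi fs C1 C2]] /iso_of_pos [g [gi gs D1 D2]].
apply/eqP; rewrite eqn_leq; apply/andP; split.
  apply: (@bt_le_iso _ _ _ _ _ _ _ _ g) => //.
apply: (@bt_le_iso _ _ _ _ _ _ _ _ f) => //.
Qed.

Lemma iso_root t t' (g : {ffun V t -> V t'}) : bijb g ->
  (forall a b, vlt a b -> vlt (g a) (g b)) -> (forall a b, vlt (g a) (g b) -> vlt a b) ->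
  forall a, (ssval (g a) == [::]) = (ssval a == [::]).
Proof.
move=> /bijbP [gi gs] C1 C2 a; apply/eqP/eqP => [E|E].
  apply/eqP; rewrite -vroot_val; apply/negP => /negP ne.
  have := C1 _ _ (troot (treeord_V t) ne).
  by rewrite vltE E addr_lt_niln.
apply/eqP; rewrite -vroot_val; apply/negP => /negP ne.
have [b gb] := gs (vroot t').
have Ea : a = vroot t by apply: val_inj.
have ba : b != vroot t by apply: contraNneq ne => Eb; rewrite Ea -Eb gb.
have := C1 _ _ (troot (treeord_V t) ba).
by rewrite -Ea gb vltE addr_lt_niln.
Qed.

Section RS.
Variables (l : seq ptree) (i : nat) (Hi : i < size l).

Lemma rsAP w : w \in verts (nth pbullet l i) -> i :: w \in verts (Node l).
Proof. exact: rs1P. Qed.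
Lemma rsBP w : w \in verts (Node (del i l)) -> sh i w \in verts (Node l).
Proof. by rewrite mem_sh. Qed.

Definition rsA : V (nth pbullet l i) -> V (Node l) := vemb rsAP.
Definition rsB : V (Node (del i l)) -> V (Node l) := vemb rsBP.
Definition rsD (a : V (Node l)) : bool := if ssval a is k :: _ then k == i else false.

Lemma rsA_inj : injective rsA.
Proof. by apply: vemb_inj => a b []. Qed.
Lemma rsB_inj : injective rsB.
Proof. apply: vemb_inj; exact: sh_inj. Qed.
Lemma rsAD x : rsD (rsA x). Proof. by rewrite /rsD vembE eqxx. Qed.
Lemma rsBD y : ~~ rsD (rsB y).
Proof. rewrite /rsD vembE; case: (ssval y) => // k z; exact: sh_head. Qed.

Lemma mem_rsA z : i :: z \in verts (Node l) -> z \in verts (nth pbullet l i).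
Proof. by rewrite mem_verts_node => /andP []. Qed.

Lemma rsAC b : rsD b -> exists x, rsA x = b.
Proof.
case: b => w Hw; rewrite /rsD /=; case: w Hw => [|k z] // Hw /eqP Ek; subst k.
have Hz := mem_rsA Hw.
by exists (SeqSub Hz); apply: V_inj.
Qed.
Lemma rsBC b : ~~ rsD b -> exists y, rsB y = b.
Proof.
case: b => w Hw; rewrite /rsD /= => Hk.
have [w' E Hw'] := @rs_cover l i w Hi Hw (negbTE Hk).
by exists (SeqSub Hw'); apply: V_inj; rewrite vembE /= E.
Qed.

Definition rsSplit : splt (V (Node l)) :=
  @MkSplt _ rsD _ _ rsA rsB rsA_inj rsB_inj rsAD rsBD rsAC rsBC.

Lemma vlt_rsAA a b : vlt (rsA a) (rsA b) = vlt a b.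
Proof. by rewrite !vltE !vembE addr_lt_cons. Qed.
Lemma vlt_rsBB a b : vlt (rsB a) (rsB b) = vlt a b.
Proof. by rewrite !vltE !vembE addr_lt_sh. Qed.
Lemma vlt_rsAB a b : vlt (rsA a) (rsB b) = false.
Proof. by rewrite !vltE !vembE addr_lt_cons_sh. Qed.
Lemma vlt_rsBA a b : vlt (rsB a) (rsA b) = (ssval a == [::]).
Proof. by rewrite !vltE !vembE addr_lt_sh_cons. Qed.

Variables (x : ptree) (m : seq ptree).
Local Notation X := (Node (x :: m)).

Lemma PS_eq :
  #|[pred f : {ffun V (Node l) -> V X} |
      [&& bijb f, [forall a, topD (f a) == rsD a] & cond (@vlt (Node l)) (@vlt X) (@vlt X) f]]| =
  II (nth pbullet l i) x * II (Node (del i l)) (Node m).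
Proof.
have HP : forall g1 g2, bijb g1 -> bijb g2 ->
   cond (@vlt (Node l)) (@vlt X) (@vlt X) (mrg (SA := rsSplit) (SB := topSplit x m) (c0 x m) g1 g2)
   = cond (@vlt (nth pbullet l i)) (@vlt x) (@vlt x) g1 &&
     cond (@vlt (Node (del i l))) (@vlt (Node m)) (@vlt (Node m)) g2.
  move=> g1 g2 b1 b2.
  rewrite (@cond_merge _ _ rsSplit (topSplit x m) (c0 x m) (@vlt (Node l)) (@vlt X) (@vlt X)
             (@vlt (nth pbullet l i)) (@vlt x) (@vlt x)
             (@vlt (Node (del i l))) (@vlt (Node m)) (@vlt (Node m)) _ _ _ _ _ _ g1 g2).
  - congr andb; case C2: (cond _ _ _ g2); rewrite ?andbF //= /cross21.
    case/condP: C2 => H1 H2.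
    apply/forallP => y; apply/forallP => z; rewrite /= vlt_rsBA vlt_top21.
    by rewrite (iso_root b2 H1 H2) implybb.
  - by move=> a b; rewrite /= vlt_rsAA.
  - by move=> a b; rewrite /= vlt_rsBB.
  - by move=> a b; rewrite /= vlt_top11.
  - by move=> a b; rewrite /= vlt_top22.
  - by move=> a b; rewrite /= vlt_top11.
  - by move=> a b; rewrite /= vlt_top22.
  - by move=> a b; rewrite /= vlt_rsAB vlt_top12.
rewrite /II !btE -(split_card HP); apply: eq_card => f; by rewrite !inE.
Qed.

End RS.

Lemma head_eq (i : nat) (w : seq nat) :
  (if w is k :: _ then k == i else false) = (w == [:: i]) || addr_lt [:: i] w.
Proof.
case: w => [|k z] //; rewrite /addr_lt /= eqseq_cons ?prefix0s ?andbT (eq_sym i k).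
by case: (k == i) => //=; case: z.
Qed.

Lemma vlt_to_c0 x m (b : V (Node (x :: m))) : vlt b (c0 x m) -> ssval b = [::].
Proof. by rewrite vltE /=; case: (ssval b) => // k z /andP []; rewrite /= ltnS ltn0. Qed.

Lemma II_rec l x m : 0 < II (Node l) (Node (x :: m)) <->
  exists i, i < size l /\ 0 < II (nth pbullet l i) x /\ 0 < II (Node (del i l)) (Node m).
Proof.
split.
  rewrite /II btE => /card_gt0P [f]; rewrite inE => /andP [Bf Cf].
  have /bijbP [fi fs] := Bf; have /condP [C1 C2] := Cf.
  have [u fu] := fs (c0 x m).
  have Hu : ssval u != [::].
    apply/negP => /eqP Eu.
    have [b fb] := fs (vroot _).
    have bu : b != vroot (Node l).
      apply/negP => /eqP Eb; move: fb; rewrite Eb.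
      have -> : vroot (Node l) = u by apply: val_inj.
      by rewrite fu => /(congr1 (@ssval _ _)).
    have := C1 _ _ (troot (treeord_V _) bu).
    have -> : vroot (Node l) = u by apply: val_inj.
    by rewrite fu fb vltE /= addr_lt_niln.
  case Eu: (ssval u) Hu => [//|k z] _.
  have Hk : k < size l by move: (ssvalP u); rewrite Eu mem_verts_node => /andP [].
  have Ez : z = [::].
    case: z Eu => // z0 z' Eu; exfalso.
    have Hw : [:: k] \in verts (Node l) by rewrite mem_verts_node Hk root_verts.
    pose w : V (Node l) := SeqSub Hw.
    have h1 : vlt w u by rewrite vltE Eu /= addr_lt_cons addr_lt_nil.
    have h2 : vlt (vroot (Node l)) u by rewrite vltE Eu.
    have := C1 _ _ h1; have := C1 _ _ h2; rewrite fu => /vlt_to_c0 E1 /vlt_to_c0 E2.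
    have : w = vroot (Node l) by apply: fi; apply: V_inj; rewrite E1 E2.
    by move/(congr1 (@ssval _ _)).
  subst z.
  have PS : 0 < #|[pred f : {ffun V (Node l) -> V (Node (x :: m))} |
      [&& bijb f, [forall a, topD (f a) == rsD k a] & cond (@vlt (Node l)) (@vlt _) (@vlt _) f]]|.
    apply/card_gt0P; exists f; rewrite inE Bf Cf andbT /=.
    apply/forallP => a; rewrite /topD /rsD !head_eq.
    have -> : (ssval (f a) == [:: 0]) = (a == u).
      apply/eqP/eqP => [E|->]; last by rewrite fu.
      by apply: fi; apply: V_inj; rewrite E fu.
    have -> : addr_lt [:: 0] (ssval (f a)) = vlt u a.
      by apply/idP/idP => [H|/C1]; [apply: C2; rewrite fu | rewrite fu].
    have -> : (ssval a == [:: k]) = (a == u).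
      by apply/eqP/eqP => [E|->]; [apply: val_inj; rewrite /= E Eu | exact: Eu].
    by rewrite vltE Eu.
  rewrite (PS_eq Hk) muln_gt0 in PS.
  by exists k; split => //; case/andP: PS.
case=> i [Hi [P1 P2]].
have : 0 < II (nth pbullet l i) x * II (Node (del i l)) (Node m) by rewrite muln_gt0 P1 P2.
rewrite -(PS_eq Hi) => /card_gt0P [f]; rewrite inE => /and3P [Bf _ Cf].
by rewrite /II btE; apply/card_gt0P; exists f; rewrite inE Bf Cf.
Qed.

Lemma ptree_le_total : total ptree_le.
Proof. by move=> a b; rewrite /ptree_le leq_total. Qed.
Lemma ptree_le_trans : transitive ptree_le.
Proof. by move=> b a c; rewrite /ptree_le; exact: leq_trans. Qed.
Lemma ptree_le_anti : antisymmetric ptree_le.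
Proof. move=> a b; rewrite /ptree_le -eqn_leq => /eqP; exact: (pcan_inj pickleK). Qed.

Lemma K1 a b : canon (Node a) = canon (Node b) <-> perm_eq (map canon a) (map canon b).
Proof.
rewrite /=; split => [[E]|H].
  by apply/(perm_sortP ptree_le_total ptree_le_trans ptree_le_anti).
by congr Node; apply/(perm_sortP ptree_le_total ptree_le_trans ptree_le_anti).
Qed.

Lemma del_perm (L : seq ptree) i : i < size L -> perm_eq L (nth pbullet L i :: del i L).
Proof.
move=> Hi; rewrite /del -{1}(cat_take_drop i L) (drop_nth pbullet Hi).
by rewrite -cat1s perm_catCA.
Qed.

Lemma K2 (L M : seq ptree) y : perm_eq L (y :: M) <->
  exists i, i < size L /\ nth pbullet L i = y /\ perm_eq (del i L) M.
Proof.
split => [H|[i [Hi [E H]]]].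
  have yL : y \in L by rewrite (perm_mem H) mem_head.
  exists (index y L); rewrite index_mem yL nth_index //; split => //; split => //.
  have Hi : index y L < size L by rewrite index_mem.
  have := del_perm Hi; rewrite nth_index // => H2.
  by rewrite -(perm_cons y); apply: perm_trans H; rewrite perm_sym.
apply: perm_trans (del_perm Hi) _; by rewrite E perm_cons.
Qed.

Lemma map_del (f : ptree -> ptree) i l : map f (del i l) = del i (map f l).
Proof. by rewrite /del map_cat map_take map_drop. Qed.

Lemma II_nil l : 0 < II (Node l) (Node [::]) <-> l = [::].
Proof.
split => [|->]; last exact: II_refl.
case: l => // t r; rewrite /II btE => /card_gt0P [f]; rewrite inE => /andP [/bijbP [fi _] _].
have Hw : [:: 0] \in verts (Node (t :: r)) by rewrite mem_verts_node root_verts.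
have : SeqSub Hw = vroot _ by apply: fi; apply: val_inj; rewrite /= !V_bullet.
by move/(congr1 (@ssval _ _)).
Qed.

Lemma claimB n : forall X, psize X <= n -> forall s, 0 < II s X <-> canon s = canon X.
Proof.
elim: n => [|n IHn] [m] HX [l]; first by [].
case: m HX => [|x m] HX.
  rewrite II_nil /=; split => [->//|[E]].
  by move: (congr1 size E); rewrite size_sort size_map => /size0nil.
have Hx : psize x <= n by rewrite -ltnS (leq_trans (psize_head x m)).
have Hm : psize (Node m) <= n by rewrite -ltnS (leq_trans (psize_tail x m)).
rewrite II_rec K1 /= K2 size_map; split.
  case=> i [Hi [P1 P2]]; exists i; split => //.
  rewrite (nth_map pbullet) //; split; first by apply/IHn.
  by rewrite -map_del; apply/K1; apply/IHn.
case=> i [Hi [P1 P2]]; exists i; split => //.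
rewrite (nth_map pbullet) // in P1; split; first by apply/IHn.
by apply/IHn => //; apply/K1; rewrite map_del.
Qed.


Unset Implicit Arguments.
Import GRing.Theory Num.Theory.
Local Open Scope ring_scope.

Theorem corollary2p5 (S : ntree -> ptree)
    (HS : forall t : ntree, canon (S t) = val t)
    (t s : ntree) :
  ((coef s (PsiTilde S t))%:R : rat)
    = (btilde (val s) (S t))%:R / (sym (val s))%:R.
Proof.
set s0 := val s; set tau := S t.
have Cs : canon s0 = s0 := eqP (valP s).
have Hb : btilde s0 tau = (\sum_(X <- Psi tau) II s0 X)%N.
  exact: (@claimA (psize tau) tau (leqnn _) _ _ _ (treeord_V s0)).
have HII : forall X, II s0 X = ((canon X == s0) * sym s0)%N.
  move=> X; case: (eqVneq (canon X) s0) => [E|ne].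
    have P1 : (0 < II s0 X)%N by apply/(@claimB (psize X) X (leqnn _) s0); rewrite Cs E.
    have P2 : (0 < II X s0)%N by apply/(@claimB (psize s0) s0 (leqnn _) X); rewrite Cs E.
    by rewrite mul1n (II_transport P1 P2).
  rewrite mul0n; apply/eqP; rewrite -leqn0 leqNgt; apply/negP.
  move/(@claimB (psize X) X (leqnn _) s0); rewrite Cs => E.
  by rewrite E eqxx in ne.
have Hc : coef s (PsiTilde S t) = count (fun X => canon X == s0) (Psi tau).
  by rewrite /coef /PsiTilde /pi_lc count_map.
have Hbc : btilde s0 tau = (coef s (PsiTilde S t) * sym s0)%N.
  rewrite Hb Hc; under eq_bigr do rewrite HII.
  rewrite -big_distrl /=; congr (_ * _)%N.
  rewrite -sum1_count [RHS]big_mkcond /=; apply: eq_bigr => X _; by case: eqP.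
have Hsym : (0 < sym s0)%N := II_refl s0.
rewrite Hbc natrM mulfK // pnatr_eq0 -lt0n //.
Qed.
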